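(* There are universal constants $\beta,\kappa>1$ such that the following holds. Let $k\ge1$, $0<\gamma,\epsilon<1/2$, $r=\beta\cdot(1/\gamma)\cdot\log(k/\epsilon)$, and let $S_1,\dots,S_\ell\subseteq[n]$ be an $r$-spread sequence of $\ell=\lceil r^k\rceil$ sets, each of size $k$. Let $X$ be uniformly random in $[\ell]$. Then for every integer $m$ with $0\le m\le r\gamma/\kappa$ and every integer $s$ with $\kappa m n/r\le s\le n$, if $W$ is a uniformly random subset of $[n]$ of size $s$ independent of $X$, then $\mathbb{E}[|\chi(X,W)|]\le k\cdot(2/3)^m$.
   Context: A sequence (repetitions allowed) of sets $S_1,\dots,S_\ell\subseteq[n]$, each of size $k$, is called $r$-spread if for every non-empty set $Z\subseteq[n]$, the number of indices $i\in[\ell]$ with $Z\subseteq S_i$ is at most $r^{k-|Z|}$. For $x\in[\ell]$ and $W\subseteq[n]$, $\chi(x,W)$ denotes $S_y\setminus W$, where $y\in[\ell]$ is chosen to minimize $|S_y\setminus W|$ among all $y$ with $S_y\subseteq S_x\cup W$, ties broken by taking the smallest such $y$. All logarithms are base $2$. *)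

(* Defs.v *)
From mathcomp Require Import all_boot.
From Stdlib Require Import Reals ZArith.

Set Implicit Arguments.
Unset Strict Implicit.
Unset Printing Implicit Defensive.

Definition log2 (x : R) : R := (ln x / ln 2)%R.

Definition spread (n l k : nat) (r : R) (S : 'I_l -> {set 'I_n}) : Prop :=
  forall Z : {set 'I_n}, Z != set0 ->
    (INR #|[set i : 'I_l | Z \subset S i]| <=
       powerRZ r (Z.of_nat k - Z.of_nat #|Z|)%Z)%R.

Definition chi_adm (n l : nat) (S : 'I_l -> {set 'I_n}) (x : 'I_l)
  (W : {set 'I_n}) (y : 'I_l) : bool := S y \subset S x :|: W.

Definition chi_opt (n l : nat) (S : 'I_l -> {set 'I_n}) (x : 'I_l)
  (W : {set 'I_n}) (y : 'I_l) : bool :=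
  chi_adm S x W y &&
  [forall z : 'I_l, chi_adm S x W z ==> (#|S y :\: W| <= #|S z :\: W|)].

(* the smallest optimal index (exists since x itself is admissible) *)
Definition chi_idx (n l : nat) (S : 'I_l -> {set 'I_n}) (x : 'I_l)
  (W : {set 'I_n}) : 'I_l :=
  odflt x [pick y : 'I_l | chi_opt S x W y &&
             [forall z : 'I_l, (z < y) ==> ~~ chi_opt S x W z]].

Definition chi (n l : nat) (S : 'I_l -> {set 'I_n}) (x : 'I_l)
  (W : {set 'I_n}) : {set 'I_n} := S (chi_idx S x W) :\: W.

Definition expected_chi (n l : nat) (S : 'I_l -> {set 'I_n}) (s : nat) : R :=
  (INR (\sum_(x : 'I_l) \sum_(W : {set 'I_n} | #|W| == s) #|chi S x W|)
   / (INR l * INR 'C(n, s)))%R.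

(* Main.v *)
Require Import Defs.
From mathcomp Require Import all_boot.
From Stdlib Require Import Reals ZArith Lia Lra.
From HB Require Import structures.
From mathcomp Require Import all_order all_algebra.
From mathcomp Require Import Rstruct.
From mathcomp Require Import ring.

Set Implicit Arguments. Unset Strict Implicit. Unset Printing Implicit Defensive.
Import Order.TTheory GRing.Theory Num.Theory.

Bind Scope ring_scope with R.
Section Fact.
Local Open Scope ring_scope.
Variable n : nat.

Lemma sum_set_prod (f : 'I_n -> bool -> R) :
  \sum_(A : {set 'I_n}) \prod_(i < n) f i (i \in A) = \prod_(i < n) (f i true + f i false).
Proof.
rewrite (eq_bigr (fun i => \sum_(b : bool) f i b)); last first.
  by move=> i _; rewrite big_bool.
rewrite bigA_distr_bigA /=.
rewrite (reindex (fun g : {ffun 'I_n -> bool} => [set i | g i])) /=; last first.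
  exists (fun A : {set 'I_n} => [ffun i => i \in A]) => g _.
    by apply/ffunP => i; rewrite ffunE inE.
  by apply/setP => i; rewrite !inE ffunE.
by apply: eq_bigr => g _; apply: eq_bigr => i _; rewrite inE.
Qed.

Definition mu (d : R) (A : {set 'I_n}) : R := \prod_(i < n) (if i \in A then d else 1 - d).

Lemma prod_sel (C T : {set 'I_n}) (a b : R) :
  \prod_(i in C) (if i \in T then a else b) = a ^+ #|C :&: T| * b ^+ #|C :\: T|.
Proof.
rewrite (bigID (fun i => i \in T)) /=.
congr (_ * _).
  rewrite (eq_bigr (fun _ => a)); last by move=> i /andP[_ ->].
  rewrite -prodr_const; apply: eq_bigl => i; by rewrite !inE.
rewrite (eq_bigr (fun _ => b)); last by move=> i /andP[_ /negbTE ->].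
rewrite -prodr_const; apply: eq_bigl => i; by rewrite !inE andbC.
Qed.

Lemma mu_closed d A : mu d A = d ^+ #|A| * (1 - d) ^+ (n - #|A|).
Proof.
rewrite /mu (eq_bigl (fun i => i \in [set: 'I_n])); last by move=> i; rewrite inE.
rewrite prod_sel setTI; congr (_ * _); congr (_ ^+ _).
by rewrite setTD cardsCs setCK card_ord.
Qed.

Lemma sum_mu d : \sum_A mu d A = 1.
Proof.
rewrite /mu (sum_set_prod (fun i b => if b then d else 1 - d)).
rewrite (eq_bigr (fun _ => 1)); last by move=> i _; rewrite addrC subrK.
by rewrite prodr_const expr1n.
Qed.

Lemma mu_ge0 d A : 0 <= d -> d <= 1 -> 0 <= mu d A.
Proof.
move=> d0 d1; rewrite /mu; apply: prodr_ge0 => i _.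
by case: (i \in A) => //; rewrite subr_ge0.
Qed.

Lemma mu_add d (W T : {set 'I_n}) : 0 <= d -> d <= 1 -> [disjoint W & T] ->
  d ^+ #|T| * mu d W <= mu d (W :|: T).
Proof.
move=> d0 d1 dis; rewrite !mu_closed.
have hc : #|W :|: T| = (#|W| + #|T|)%nat by rewrite cardsU (disjoint_setI0 dis) cards0 subn0.
rewrite hc mulrA -exprD addnC.
apply: ler_wpM2l; first exact: exprn_ge0.
apply: ler_wiXn2l; first by rewrite subr_ge0.
  by rewrite lerBlDr lerDl.
by rewrite subnDA leq_subr.
Qed.

Lemma eqset_prod (A B : {set 'I_n}) :
  ((A == B)%:R : R) = \prod_(i < n) (((i \in A) == (i \in B))%:R : R).
Proof.
case: eqP => [->|hne].
  by rewrite big1 // => i _; rewrite eqxx.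
have [i hi] : exists i, (i \in A) != (i \in B).
  case: (boolP [exists i, (i \in A) != (i \in B)]) => [/existsP //|/existsPn h].
  exfalso; apply: hne; apply/setP => i.
  by move: (h i); rewrite negbK => /eqP.
by rewrite (bigD1 i) //= (negbTE hi) mul0r.
Qed.

Lemma mu_union (a b : R) (g : {set 'I_n} -> R) :
  \sum_W1 \sum_W2 mu a W1 * mu b W2 * g (W1 :|: W2) =
  \sum_U mu (a + b - a * b) U * g U.
Proof.
have inner : forall U : {set 'I_n},
  \sum_W1 \sum_W2 ((W1 :|: W2 == U)%:R * mu a W1 * mu b W2) = mu (a + b - a * b) U.
  move=> U.
  pose h (i : 'I_n) (b1 b2 : bool) : R :=
    (if b1 then a else 1 - a) * (if b2 then b else 1 - b) * (((b1 || b2) == (i \in U))%:R).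
  have e1 : forall W1 W2 : {set 'I_n}, (W1 :|: W2 == U)%:R * mu a W1 * mu b W2 =
        \prod_(i < n) h i (i \in W1) (i \in W2).
    move=> W1 W2; rewrite eqset_prod /mu /h -!big_split /=.
    by apply: eq_bigr => i _; rewrite in_setU; ring.
    rewrite (eq_bigr (fun W1 : {set 'I_n} => \prod_(i < n) (h i (i \in W1) true + h i (i \in W1) false))); last first.
    move=> W1 _; rewrite (eq_bigr (fun W2 : {set 'I_n} => \prod_(i < n) h i (i \in W1) (i \in W2))); last first.
      by move=> W2 _; rewrite e1.
    exact: (sum_set_prod (fun i b2 => h i (i \in W1) b2)).
  rewrite (sum_set_prod (fun i b1 => h i b1 true + h i b1 false)) /mu.
  apply: eq_bigr => i _; rewrite /h; case: (i \in U) => /=; rewrite ?mulr1 ?mulr0 ?addr0 ?add0r; rewrite ?RplusE ?RminusE ?RmultE; ring.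
rewrite (eq_bigr (fun W1 : {set 'I_n} => \sum_W2 \sum_U ((W1 :|: W2 == U)%:R * mu a W1 * mu b W2 * g U))); last first.
  move=> W1 _; apply: eq_bigr => W2 _.
  rewrite (bigD1 (W1 :|: W2)) //= eqxx mul1r big1 ?addr0 // => U /negbTE.
  by rewrite eq_sym => ->; rewrite !mul0r.
rewrite (eq_bigr (fun W1 : {set 'I_n} => \sum_U \sum_W2 ((W1 :|: W2 == U)%:R * mu a W1 * mu b W2 * g U))); last first.
  by move=> W1 _; rewrite exchange_big.
rewrite exchange_big; apply: eq_bigr => U _.
rewrite -inner mulr_suml; apply: eq_bigr => W1 _; rewrite mulr_suml //.
Qed.

Lemma mu_marg d : \sum_A mu d A * (#|A|%:R) = n%:R * d.
Proof.
have hc : forall A : {set 'I_n}, (#|A|%:R : R) = \sum_(j < n) ((j \in A)%:R).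
  move=> A; rewrite -sum1_card natr_sum big_mkcond /=.
  by apply: eq_bigr => j _; case: (j \in A).
rewrite (eq_bigr (fun A : {set 'I_n} => \sum_(j < n) mu d A * (j \in A)%:R)); last first.
  by move=> A _; rewrite hc mulr_sumr.
rewrite exchange_big /= (eq_bigr (fun _ => d)); last first.
  move=> j _.
  pose f (i : 'I_n) (bb : bool) : R := (if bb then d else 1 - d) * (if i == j then (bb%:R : R) else 1).
  rewrite (eq_bigr (fun A : {set 'I_n} => \prod_(i < n) f i (i \in A))); last first.
    move=> A _; rewrite /f big_split /= /mu; congr (_ * _).
    by rewrite (bigD1 j) //= eqxx big1 ?mulr1 // => i /negbTE ->.
  rewrite sum_set_prod /f (bigD1 j) //= eqxx big1 ?mulr1; last first.
    by move=> i /negbTE ->; rewrite !mulr1 addrC subrK.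
  by rewrite mulr0 addr0.
by rewrite sumr_const card_ord mulr_natl.
Qed.

Definition decr (g : {set 'I_n} -> R) := forall A B : {set 'I_n}, A \subset B -> g B <= g A.

Lemma sum_shift (g : {set 'I_n} -> R) j : decr g ->
  (j.+1)%:R * \sum_(A : {set 'I_n} | #|A| == j.+1) g A <= (n - j)%:R * \sum_(B : {set 'I_n} | #|B| == j) g B.
Proof.
move=> hg.
have e1 : (j.+1)%:R * \sum_(A : {set 'I_n} | #|A| == j.+1) g A =
          \sum_(A : {set 'I_n}) \sum_(a < n) (if (#|A| == j.+1) && (a \in A) then g A else 0).
  rewrite mulr_sumr big_mkcond /=; apply: eq_bigr => A _.
  case: eqP => hA /=.
    rewrite -big_mkcond /= sumr_const -hA -mulr_natl.
    by rewrite mulr1 mulr_natl.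
  by rewrite big1.
rewrite e1.
have e2 : \sum_(A : {set 'I_n}) \sum_(a < n) (if (#|A| == j.+1) && (a \in A) then g A else 0) <=
          \sum_(A : {set 'I_n}) \sum_(a < n) (if (#|A| == j.+1) && (a \in A) then g (A :\ a) else 0).
  apply: ler_sum => A _; apply: ler_sum => a _.
  case: ifP => // _; apply: hg; exact: subsetDl.
apply: (le_trans e2); rewrite exchange_big /=.
have e3 : forall a : 'I_n,
  \sum_(A : {set 'I_n}) (if (#|A| == j.+1) && (a \in A) then g (A :\ a) else 0) =
  \sum_(B : {set 'I_n}) (if (#|B| == j) && (a \notin B) then g B else 0).
  move=> a; rewrite -big_mkcond -[RHS]big_mkcond /=.
  rewrite (reindex_onto (fun B => a |: B) (fun A => A :\ a)) /=; last first.
    by move=> A /andP[_ hA]; rewrite setD1K.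
  apply: eq_big => B.
    rewrite setU11 andbT cardsU1.
    case hB: (a \in B) => /=.
      rewrite andbF; apply/negbTE/negP => /andP[_ /eqP hE].
      by move: hB; rewrite -hE setD11.
    by rewrite setU1K ?hB // eqxx andbT add1n eqSS.
  by move=> /andP[_ /eqP ->].
rewrite (eq_bigr _ (fun a _ => e3 a)) exchange_big /= mulr_sumr big_mkcond /=.
rewrite [X in _ <= X]big_mkcond /=; apply: ler_sum => B _.
case: eqP => hB /=.
  rewrite -big_mkcond /= sumr_const -mulr_natl -hB.
  have -> : #|[pred a : 'I_n | a \notin B]| = #|~: B| by apply: eq_card => x; rewrite !inE.
  by rewrite cardsCs setCK card_ord mulr1 mulr_natl.
by rewrite big1.
Qed.

Definition avg (g : {set 'I_n} -> R) j :=
  (\sum_(A : {set 'I_n} | #|A| == j) g A) / ('C(n, j))%:R.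

Lemma bin_gt0R j : (j <= n)%nat -> (0 : R) < ('C(n, j))%:R.
Proof. by move=> hj; rewrite ltr0n bin_gt0. Qed.

Lemma avg_step g j : decr g -> (j < n)%nat -> avg g j.+1 <= avg g j.
Proof.
move=> hg hj; rewrite /avg.
set S1 := \sum_(A : {set 'I_n} | #|A| == j.+1) g A.
set S0 := \sum_(A : {set 'I_n} | #|A| == j) g A.
have c0 := bin_gt0R (ltnW hj).
have c1 := bin_gt0R hj.
have hs := sum_shift j hg; rewrite -/S1 -/S0 in hs.
have hb : ((j.+1)%:R * ('C(n, j.+1))%:R : R) = (n - j)%:R * ('C(n, j))%:R.
  by rewrite -natrM mul_bin_left natrM.
have hj1 : (0 : R) < (j.+1)%:R by rewrite ltr0n.
rewrite ler_pdivrMr // mulrAC ler_pdivlMr //.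
set C0 := ('C(n, j))%:R in c0 hb *.
set C1 := ('C(n, j.+1))%:R in c1 hb *.
rewrite -(ler_pM2l hj1).
have -> : (j.+1)%:R * (S1 * C0) = ((j.+1)%:R * S1) * C0 by rewrite mulrA.
have -> : (j.+1)%:R * (S0 * C1) = ((n-j)%:R * S0) * C0.
  by rewrite mulrCA hb; ring.
by apply: ler_wpM2r => //; apply: ltW.
Qed.

Lemma avg_le g j s : decr g -> (j <= s)%nat -> (s <= n)%nat -> avg g s <= avg g j.
Proof.
move=> hg hjs hsn; elim: s hjs hsn => [|s IH] hjs hsn.
  by move: hjs; rewrite leqn0 => /eqP ->.
case: (ltngtP j s.+1) hjs => // [hlt|->] _ //.
apply: le_trans (avg_step hg hsn) (IH _ (ltnW hsn)).
by rewrite -ltnS.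
Qed.

Lemma part_card (F : {set 'I_n} -> R) s :
  \sum_(U : {set 'I_n} | (#|U| <= s)%nat) F U =
  \sum_(j < s.+1) \sum_(U : {set 'I_n} | #|U| == j) F U.
Proof.
rewrite (eq_bigr (fun j : 'I_s.+1 => \sum_(U : {set 'I_n}) (if #|U| == j then F U else 0))); last first.
  by move=> j _; rewrite big_mkcond.
rewrite exchange_big /= big_mkcond /=; apply: eq_bigr => U _.
case: ifP => hU.
  rewrite (bigD1 (Ordinal (hU : #|U| < s.+1)%nat)) //= eqxx big1 ?addr0 // => j hj.
  case: eqP => // hE; move: hj; apply: contraNeq => _; apply/eqP/val_inj => /=.
  by rewrite hE.
rewrite big1 // => j _; case: eqP => // hE; move: hU.
by rewrite hE -ltnS ltn_ord.
Qed.

Lemma binom_bound (rho : R) g s : 0 <= rho -> rho <= 1 -> decr g ->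
  (forall A, 0 <= g A) -> (s <= n)%nat ->
  (\sum_(U : {set 'I_n} | (#|U| <= s)%nat) mu rho U) * avg g s <= \sum_U mu rho U * g U.
Proof.
move=> r0 r1 hg g0 hs.
apply: (@le_trans _ _ (\sum_(U : {set 'I_n} | (#|U| <= s)%nat) mu rho U * g U)); last first.
  rewrite [X in X <= _]big_mkcond /=; apply: ler_sum => U _.
  by case: ifP => // _; apply: mulr_ge0 => //; apply: mu_ge0.
rewrite part_card mulr_suml part_card; apply: ler_sum => j _.
have hj : (j <= s)%nat by rewrite -ltnS ltn_ord.
have hjn : (j <= n)%nat := leq_trans hj hs.
have [c ec] : {c | c = rho ^+ j * (1 - rho) ^+ (n - j)} by eexists.
have e1 : forall U : {set 'I_n}, #|U| == j -> mu rho U = c.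
  by move=> U /eqP hU; rewrite mu_closed hU ec.
rewrite (eq_bigr (fun _ => c)) //. 
rewrite [X in _ <= X](eq_bigr (fun U : {set 'I_n} => c * g U)); last by move=> U hU; rewrite e1.
rewrite -mulr_sumr sumr_const.
have -> : #|[pred U : {set 'I_n} | #|U| == j]| = 'C(n, j).
  rewrite -[in RHS](card_ord n) -card_draws.
  by apply: eq_card => U; rewrite !inE.
have c0 : 0 <= c by rewrite ec; apply: mulr_ge0; apply: exprn_ge0 => //; rewrite subr_ge0.
rewrite -mulr_natr -mulrA; apply: ler_wpM2l => //.
rewrite mulrC -ler_pdivlMr ?bin_gt0R //.
exact: avg_le.
Qed.

Lemma markov_size (rho : R) s : 0 <= rho -> rho <= 1 ->
  1 - (n%:R * rho) / (s.+1)%:R <= \sum_(U : {set 'I_n} | (#|U| <= s)%nat) mu rho U.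
Proof.
move=> r0 r1.
have hs : (0 : R) < (s.+1)%:R by rewrite ltr0n.
have := sum_mu rho; rewrite (bigID (fun U : {set 'I_n} => (#|U| <= s)%nat)) /=.
set A := \sum_(U : {set 'I_n} | (#|U| <= s)%nat) mu rho U.
set B := \sum_(U : {set 'I_n} | ~~ (#|U| <= s)%nat) mu rho U => hAB.
suff hB : B <= (n%:R * rho) / (s.+1)%:R by rewrite lerBlDr -[X in X <= _]hAB lerD2l.
rewrite -mu_marg ler_pdivlMr // mulr_suml.
rewrite [X in _ <= X](bigID (fun U : {set 'I_n} => (#|U| <= s)%nat)) /=.
apply: (@le_trans _ _ (\sum_(i : {set 'I_n} | ~~ (#|i| <= s)%nat) mu rho i * #|i|%:R)).
  apply: ler_sum => U hU; apply: ler_wpM2l; first exact: mu_ge0.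
  by rewrite ler_nat ltnNge.
rewrite lerDr; apply: sumr_ge0 => U _; apply: mulr_ge0 => //; exact: mu_ge0.
Qed.
End Fact.

Section LnFacts.
Local Open Scope ring_scope.
Lemma ln_le_sub1 (x : R) : 0 < x -> ln x <= x - 1.
Proof.
move=> hx; have h := exp_ineq1_le (ln x).
rewrite exp_ln in h; last exact/RltP.
move/RleP: h; rewrite RplusE => h.
by rewrite lerBrDr addrC.
Qed.

Lemma ln_mulR (x y : R) : 0 < x -> 0 < y -> ln (x * y) = ln x + ln y.
Proof. by move=> /RltP hx /RltP hy; rewrite -RmultE ln_mult. Qed.

Lemma ln_expR (x : R) k : 0 < x -> ln (x ^+ k) = k%:R * ln x.
Proof. by move=> /RltP hx; rewrite -RpowE ln_pow // INRE. Qed.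

Lemma ln_ltR (x y : R) : 0 < x -> x < y -> ln x < ln y.
Proof. by move=> /RltP hx /RltP hxy; apply/RltP; apply: ln_increasing. Qed.

Lemma ln_leR (x y : R) : 0 < x -> x <= y -> ln x <= ln y.
Proof.
move=> hx; rewrite le_eqVlt => /orP[/eqP ->//|hxy].
by apply: ltW; apply: ln_ltR.
Qed.

Lemma ln1R : ln (1 : R) = 0.
Proof. exact: ln_1. Qed.

Lemma ln2_gt0 : 0 < ln (2%:R : R).
Proof. by rewrite -ln1R; apply: ln_ltR => //; rewrite ltr1n. Qed.

Lemma lnV (x : R) : 0 < x -> ln (x^-1) = - ln x.
Proof. by move=> /RltP hx; rewrite -RinvE ln_Rinv. Qed.
End LnFacts.

Section Round.
Local Open Scope ring_scope.
Variables (n l : nat) (F : 'I_l -> {set 'I_n}).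
Implicit Types (W Z T : {set 'I_n}) (x y z : 'I_l).

Definition adm (W : {set 'I_n}) (x z : 'I_l) : bool :=
  (#|F z| <= #|F x|)%nat && (F z \subset F x :|: W).

Lemma adm_refl W x : adm W x x.
Proof. by rewrite /adm leqnn subsetUl. Qed.

Definition nxt (W : {set 'I_n}) (x : 'I_l) : 'I_l :=
  arg_min x (adm W x) (fun z => #|F z :\: W|).

Definition G (W : {set 'I_n}) (x : 'I_l) : {set 'I_n} := F (nxt W x) :\: W.

Lemma nxtP W x : adm W x (nxt W x) /\ forall z, adm W x z -> (#|G W x| <= #|F z :\: W|)%nat.
Proof.
rewrite /G /nxt; case: arg_minnP; first exact: adm_refl.
by move=> y hy hmin; split.
Qed.

Definition dec (Z : {set 'I_n}) : option 'I_l :=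
  if [pick z | F z \subset Z] is Some z0 then Some (arg_min z0 (fun z => F z \subset Z) (fun z => #|F z|))
  else None.

Lemma decP (Z : {set 'I_n}) y : F y \subset Z -> exists z, dec Z = Some z /\ F z \subset Z /\
  forall z', F z' \subset Z -> (#|F z| <= #|F z'|)%nat.
Proof.
move=> hy; rewrite /dec; case: pickP => [z0 hz0|/(_ y)]; last by rewrite hy.
case: arg_minnP => // z hz hmin.
by exists z; split.
Qed.

Definition Nc (T : {set 'I_n}) : nat := #|[set x | T \subset F x]|.

Definition qq (d lam : R) (Z T : {set 'I_n}) (x : 'I_l) : R :=
  if dec Z is Some z then
    (if (T \subset F z) && (T \subset F x) then
       mu d Z * lam ^+ #|T| * (1 - lam) ^+ (#|F z| - #|T|) / (Nc T)%:R else 0)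
  else 0.

Lemma qq_ge0 d lam Z T x : 0 <= d -> d <= 1 -> 0 <= lam -> lam <= 1 -> 0 <= qq d lam Z T x.
Proof.
move=> d0 d1 l0 l1; rewrite /qq; case: (dec Z) => // z; case: ifP => // _.
apply: divr_ge0 => //; apply: mulr_ge0; first apply: mulr_ge0.
- exact: mu_ge0.
- exact: exprn_ge0.
- by apply: exprn_ge0; rewrite subr_ge0.
Qed.

Lemma sum_sub (C : {set 'I_n}) (lam : R) :
  \sum_(T : {set 'I_n}) (if T \subset C then lam ^+ #|T| * (1 - lam) ^+ (#|C| - #|T|) else 0) = 1.
Proof.
pose f (i : 'I_n) (b : bool) : R :=
  if i \in C then (if b then lam else 1 - lam) else (if b then 0 else 1).
rewrite (eq_bigr (fun T : {set 'I_n} => \prod_(i < n) f i (i \in T))); last first.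
  move=> T _; rewrite (bigID (fun i => i \in C)) /=.
  case: ifP => hT.
    rewrite [X in _ = _ * X]big1 ?mulr1; last first.
      move=> i hi; rewrite /f (negbTE hi); case: ifP => // hiT.
      by move: hi; rewrite (subsetP hT _ hiT).
    rewrite (eq_bigr (fun i => if i \in T then lam else 1 - lam)); last first.
      by move=> i hi; rewrite /f hi.
    rewrite prod_sel; congr (_ * _ ^+ _).
      by rewrite (setIidPr hT).
    by rewrite cardsD (setIidPr hT).
  have [i hi] : exists i, (i \in T) && (i \notin C).
    case/subsetPn: (negbT hT) => i h1 h2; exists i; by rewrite h1 h2.
  case/andP: hi => h1 h2.
  by rewrite [X in _ = _ * X](bigD1 i h2) /= /f (negbTE h2) h1 mul0r mulr0.
rewrite sum_set_prod (eq_bigr (fun _ => 1)); first by rewrite prodr_const expr1n.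
move=> i _; rewrite /f; case: (i \in C); last by rewrite add0r.
by rewrite addrC subrK.
Qed.

Lemma sum_x_le1 (T : {set 'I_n}) :
  \sum_(x : 'I_l) (if T \subset F x then (1:R) else 0) / (Nc T)%:R <= 1.
Proof.
rewrite -mulr_suml -big_mkcond /= sumr_const.
have -> : #|[pred x : 'I_l | T \subset F x]| = Nc T by rewrite /Nc; apply: eq_card => x; rewrite !inE.
case: (posnP (Nc T)) => [->|hp]; first by rewrite mulr0n mul0r.
by rewrite -mulr_natl mulr1 mulfV // pnatr_eq0 -lt0n.
Qed.

Lemma sum_qq d lam : 0 <= d -> d <= 1 -> 0 <= lam -> lam <= 1 ->
  \sum_(Z : {set 'I_n}) \sum_(T : {set 'I_n}) \sum_(x : 'I_l) qq d lam Z T x <= 1.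
Proof.
move=> d0 d1 l0 l1.
rewrite -(sum_mu n d); apply: ler_sum => Z _.
rewrite /qq; case: (dec Z) => [z|]; last first.
  by rewrite big1 ?mu_ge0 // => T _; rewrite big1.
apply: (@le_trans _ _ (\sum_(T : {set 'I_n}) mu d Z *
   (if T \subset F z then lam ^+ #|T| * (1 - lam) ^+ (#|F z| - #|T|) else 0))); last first.
  by rewrite -mulr_sumr sum_sub mulr1.
apply: ler_sum => T _.
case: ifP => hTz; last by rewrite big1 ?mulr0 // => x _; rewrite andFb.
set c := mu d Z * lam ^+ #|T| * (1 - lam) ^+ (#|F z| - #|T|).
have c0 : 0 <= c.
  apply: mulr_ge0; first apply: mulr_ge0.
  - exact: mu_ge0.
  - exact: exprn_ge0.
  - by apply: exprn_ge0; rewrite subr_ge0.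
rewrite mulrA -/c.
apply: (@le_trans _ _ (c * \sum_(x : 'I_l) (if T \subset F x then (1:R) else 0) / (Nc T)%:R)); last first.
  by rewrite -[X in _ <= X]mulr1; apply: ler_wpM2l => //; apply: sum_x_le1.
rewrite mulr_sumr; apply: ler_sum => x _; rewrite andTb.
by case: ifP => _; rewrite ?mul0r ?mulr0 // mul1r.
Qed.

Lemma G_sub W x : G W x \subset F x.
Proof.
have [/andP[_ hFy] _] := nxtP W x.
apply/subsetP => e; rewrite /G inE => /andP[heW hey].
by have := subsetP hFy e hey; rewrite inE (negbTE heW) orbF.
Qed.

Lemma G_dis W x : [disjoint W & G W x].
Proof.
rewrite -setI_eq0; apply/eqP/setP => e; rewrite !inE /G.
by case: (e \in W); rewrite ?andbF.
Qed.

Lemma qq_lower d lam r W x : 0 < d -> d <= 1 -> 0 < lam -> lam <= 1 -> 0 < r ->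
  (forall T, (Nc T)%:R * r ^+ #|T| <= l%:R) ->
  mu d W / l%:R * ((d * lam * r) ^+ #|G W x| * (1 - lam) ^+ #|F x|)
  <= qq d lam (W :|: G W x) (G W x) x.
Proof.
move=> d0 d1 l0 l1 r0 hsp.
have [hady hmin] := nxtP W x.
case/andP: (hady) => hyx hFy.
set y := nxt W x in hyx hFy hmin.
set T := G W x in hmin *.
have hTx : T \subset F x by exact: G_sub.
have hdis : [disjoint W & T] by exact: G_dis.
have hyZ : F y \subset W :|: T.
  apply/subsetP => e hey; rewrite !inE /T /G -/y.
  by case: (e \in W); rewrite ?hey.
have [z [hdec [hz hzmin]]] := decP hyZ.
have hzy := hzmin _ hyZ.
have hadz : adm W x z.
  rewrite /adm (leq_trans hzy hyx) /=.
  apply: (subset_trans hz); apply/subsetP => e; rewrite [e \in F x :|: W]in_setU in_setU.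
  by case/orP => [->|heT]; rewrite ?orbT // (subsetP hTx _ heT).
have hTle := hmin _ hadz.
have hzT : F z :\: W \subset T.
  apply/subsetP => e; rewrite inE => /andP[heW hez].
  by have := subsetP hz e hez; rewrite inE (negbTE heW).
have hEq : F z :\: W = T.
  by apply/eqP; rewrite eqEcard hzT hTle.
have hTz : T \subset F z by rewrite -hEq subsetDl.
rewrite /qq hdec hTz hTx /=.
have hN : (0 < Nc T)%nat.
  by rewrite /Nc card_gt0; apply/set0Pn; exists x; rewrite inE.
have hNR : (0 : R) < (Nc T)%:R by rewrite ltr0n.
have hl : (0 : R) < l%:R.
  have := hsp T; have : 0 < (Nc T)%:R * r ^+ #|T| by rewrite mulr_gt0 // exprn_gt0.
  by move=> h1 h2; apply: lt_le_trans h1 h2.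
set t := #|T|.
have -> : mu d W / l%:R * ((d * lam * r) ^+ t * (1 - lam) ^+ #|F x|) =
    d ^+ t * mu d W * lam ^+ t * (1 - lam) ^+ #|F x| * (r ^+ t / l%:R).
  rewrite !exprMn; ring.
have -> : mu d (W :|: T) * lam ^+ t * (1 - lam) ^+ (#|F z| - t) / (Nc T)%:R =
    mu d (W :|: T) * lam ^+ t * (1 - lam) ^+ (#|F z| - t) * (1 / (Nc T)%:R).
  by rewrite mul1r.
have b0 : 0 <= 1 - lam by rewrite subr_ge0.
apply: ler_pM.
- apply: mulr_ge0; first apply: mulr_ge0; first apply: mulr_ge0.
  + by apply: exprn_ge0; apply: ltW.
  + by apply: mu_ge0 => //; apply: ltW.
  + by apply: exprn_ge0; apply: ltW.
  + exact: exprn_ge0.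
- by apply: divr_ge0; [apply: exprn_ge0; apply: ltW | apply: ltW].
- apply: ler_pM.
  + apply: mulr_ge0; first apply: mulr_ge0.
    * by apply: exprn_ge0; apply: ltW.
    * by apply: mu_ge0 => //; apply: ltW.
    * by apply: exprn_ge0; apply: ltW.
  + exact: exprn_ge0.
  + apply: ler_pM.
    * by apply: mulr_ge0; [apply: exprn_ge0; apply: ltW | apply: mu_ge0 => //; apply: ltW].
    * by apply: exprn_ge0; apply: ltW.
    * by apply: mu_add => //; apply: ltW.
    * by [].
  + apply: ler_wiXn2l => //; first by rewrite lerBlDr lerDl ltW.
    apply: leq_trans (leq_subr _ _) _.
    exact: leq_trans hzy hyx.
- rewrite ler_pdivlMr // mulrAC ler_pdivrMr // mul1r mulrC.
  exact: hsp.
Qed.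

Lemma sum_enc d lam : 0 <= d -> d <= 1 -> 0 <= lam -> lam <= 1 ->
  \sum_x \sum_W qq d lam (W :|: G W x) (G W x) x <= 1.
Proof.
move=> d0 d1 l0 l1.
apply: le_trans (sum_qq d0 d1 l0 l1).
rewrite [X in _ <= X](eq_bigr (fun Z => \sum_(p : {set 'I_n} * 'I_l) qq d lam Z p.1 p.2));
  last by move=> Z _; rewrite pair_bigA.
rewrite [X in _ <= X]pair_bigA /= pair_bigA /=.
pose h (p : 'I_l * {set 'I_n}) : {set 'I_n} * ({set 'I_n} * 'I_l) :=
  (p.2 :|: G p.2 p.1, (G p.2 p.1, p.1)).
pose Q (q : {set 'I_n} * ({set 'I_n} * 'I_l)) := qq d lam q.1 q.2.1 q.2.2.
have hinj : {in [set: 'I_l * {set 'I_n}] &, injective h}.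
  move=> [x1 W1] [x2 W2] _ _ [] /=.
  move=> hU hG hx; subst x2.
  have e1 : W1 = (W1 :|: G W1 x1) :\: G W1 x1.
    by rewrite setDUl setDv setU0; apply/esym/setDidPl; apply: G_dis.
  have e2 : W2 = (W2 :|: G W2 x1) :\: G W2 x1.
    by rewrite setDUl setDv setU0; apply/esym/setDidPl; apply: G_dis.
  by rewrite e1 e2 hU hG.
have -> : \sum_(p : 'I_l * {set 'I_n}) qq d lam (p.2 :|: G p.2 p.1) (G p.2 p.1) p.1 =
          \sum_(q in h @: [set: 'I_l * {set 'I_n}]) Q q.
  rewrite big_imset //=; apply: eq_bigl => p; by rewrite inE.
rewrite [X in _ <= X](bigID (fun q => q \in h @: [set: 'I_l * {set 'I_n}])) /=.
rewrite lerDl; apply: sumr_ge0 => q _; exact: qq_ge0.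
Qed.

Lemma round d r : 0 < d -> d < 1 -> 16%:R <= d * r -> (0 < l)%nat ->
  (forall T, (Nc T)%:R * r ^+ #|T| <= l%:R) ->
  \sum_x \sum_W mu d W * (#|G W x|)%:R <= 3%:R^-1 * \sum_x (#|F x|)%:R.
Proof.
move=> d0 d1 hdr hl0 hsp.
have hlR : (0 : R) < l%:R by rewrite ltr0n.
have r0 : 0 < r.
  have : 0 < d * r by apply: lt_le_trans hdr; rewrite ltr0n.
  by rewrite pmulr_rgt0.
set lam : R := 2%:R^-1.
have l0 : 0 < lam by rewrite invr_gt0 ltr0n.
have l1 : lam <= 1 by rewrite invf_le1 ?ler1n ?ltr0n.
have hb : 1 - lam = lam.
  by rewrite /lam; field.
set a := d * lam * r.
have ha8 : 2%:R ^+ 3 <= a.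
  have -> : a = (d * r) * lam by rewrite /a; ring.
  have -> : (2%:R : R) ^+ 3 = 16%:R * lam by rewrite /lam; field.
  by apply: ler_wpM2r => //; apply: ltW.
have a0 : 0 < a by apply: lt_le_trans ha8; rewrite exprn_gt0 // ltr0n.
pose P (x : 'I_l) (W : {set 'I_n}) := mu d W / l%:R.
pose K (x : 'I_l) (W : {set 'I_n}) := a ^+ #|G W x| * (1 - lam) ^+ #|F x|.
have K0 : forall x W, 0 < K x W.
  by move=> x W; apply: mulr_gt0; apply: exprn_gt0; rewrite // hb.
have P0 : forall x W, 0 <= P x W.
  by move=> x W; apply: divr_ge0; [apply: mu_ge0; apply: ltW | apply: ltW].
have hPK : forall x W, P x W * K x W <= qq d lam (W :|: G W x) (G W x) x.
  by move=> x W; apply: qq_lower => //; apply: ltW.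
have sumP : \sum_x \sum_W P x W = 1.
  rewrite (eq_bigr (fun _ => l%:R^-1)); last first.
    by move=> x _; rewrite /P -mulr_suml sum_mu mul1r.
  by rewrite sumr_const card_ord -(mulr_natl (l%:R^-1)) mulfV // pnatr_eq0 -lt0n.
have hGibbs : \sum_x \sum_W P x W * ln (K x W) <= 0.
  apply: (@le_trans _ _ (\sum_x \sum_W (P x W * K x W - P x W))).
    apply: ler_sum => x _; apply: ler_sum => W _.
    rewrite -[X in _ <= _ - X]mulr1 -mulrBr; apply: ler_wpM2l => //.
    exact: ln_le_sub1.
  rewrite (eq_bigr (fun x => \sum_W P x W * K x W - \sum_W P x W)); last first.
    by move=> x _; rewrite sumrB.
  rewrite sumrB sumP subr_le0.
  apply: le_trans (sum_enc (ltW d0) (ltW d1) (ltW l0) l1).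
  by apply: ler_sum => x _; apply: ler_sum => W _; apply: hPK.
set X := \sum_x \sum_W mu d W * (#|G W x|)%:R.
set Y := \sum_x (#|F x|)%:R.
have expand : \sum_x \sum_W P x W * ln (K x W) = ln a / l%:R * X + ln lam / l%:R * Y.
  rewrite /X /Y !mulr_sumr -big_split /=; apply: eq_bigr => x _.
  rewrite mulr_sumr.
  have -> : ln lam / l%:R * (#|F x|)%:R = \sum_(W : {set 'I_n}) mu d W * (ln lam / l%:R * (#|F x|)%:R).
    by rewrite -mulr_suml (sum_mu n d) mul1r.
  rewrite -big_split /=; apply: eq_bigr => W _.
  rewrite /P /K ln_mulR ?exprn_gt0 // ?hb // !ln_expR //.
  ring.
have X0 : 0 <= X.
  by apply: sumr_ge0 => x _; apply: sumr_ge0 => W _; apply: mulr_ge0 => //; apply: mu_ge0; apply: ltW.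
have Y0 : 0 <= Y by apply: sumr_ge0.
have hl2 := ln2_gt0.
have hla : 3%:R * ln (2%:R) <= ln a.
  by rewrite -ln_expR ?ltr0n //; apply: ln_leR => //; rewrite exprn_gt0 // ltr0n.
have hlam : ln lam = - ln (2%:R) by rewrite /lam lnV // ltr0n.
move: hGibbs; rewrite expand hlam => h.
have h2 : ln a * X <= ln (2%:R) * Y.
  have : (ln a * X - ln (2%:R) * Y) / l%:R <= 0.
    by move: h; congr (_ <= _); rewrite /=; ring.
  by rewrite pmulr_lle0 ?invr_gt0 // subr_le0.
have h3 : 3%:R * ln (2%:R) * X <= ln (2%:R) * Y.
  by apply: le_trans h2; apply: ler_wpM2r.
rewrite -(ler_pM2l hl2) -(ler_pM2l (_ : 0 < 3%:R)) ?ltr0n //.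
have e : (3%:R : R) * (ln (2%:R) * (3%:R^-1 * Y)) = ln (2%:R) * Y by field.
by rewrite e mulrA.
Qed.
End Round.

Section Chain.
Local Open Scope ring_scope.
Variables (n l : nat) (S : 'I_l -> {set 'I_n}).
Implicit Types (W Z T U : {set 'I_n}) (x y z : 'I_l).

Lemma chi_idx_opt x W : chi_opt S x W (chi_idx S x W).
Proof.
rewrite /chi_idx.
have hx : chi_adm S x W x by rewrite /chi_adm subsetUl.
case: (arg_minnP (fun z => #|S z :\: W|) hx) => y0 hy0 hmin0.
have hopt0 : chi_opt S x W y0.
  by rewrite /chi_opt hy0 /=; apply/forallP => z; apply/implyP => hz; apply: hmin0.
case: (arg_minnP (fun z : 'I_l => val z) hopt0) => y1 hy1 hmin1.
case: pickP => [y /andP[hy _] //|/(_ y1)].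
move/negbT; rewrite hy1 andTb => /forallPn [z].
rewrite negb_imply negbK => /andP[hz hoz].
by have := hmin1 z hoz; rewrite leqNgt hz.
Qed.

Lemma chi_min x W z : chi_adm S x W z -> (#|chi S x W| <= #|S z :\: W|)%nat.
Proof.
move=> hz; have := chi_idx_opt x W; rewrite /chi_opt => /andP[_ /forallP h].
by have := h z; rewrite hz.
Qed.

Lemma chi_mono x W W' : W \subset W' -> (#|chi S x W'| <= #|chi S x W|)%nat.
Proof.
move=> hW; set y := chi_idx S x W.
have hy : chi_adm S x W y by have := chi_idx_opt x W; rewrite /chi_opt => /andP[].
have hy' : chi_adm S x W' y.
  by apply: (subset_trans hy); apply: setUS.
apply: (leq_trans (chi_min hy')); apply: subset_leq_card.
by apply: setDS.
Qed.

Definition good U0 (F : 'I_l -> {set 'I_n}) :=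
  forall x, exists u, F x = S u :\: U0 /\ S u \subset S x :|: U0.

Lemma good_sub U0 F : good U0 F -> forall x, F x \subset S x.
Proof.
move=> hg x; have [u [-> hu]] := hg x.
apply/subsetP => e; rewrite inE => /andP[he1 he2].
by have := subsetP hu e he2; rewrite inE (negbTE he1) orbF.
Qed.

Lemma chi_le_good U0 F x : good U0 F -> (#|chi S x U0| <= #|F x|)%nat.
Proof. by move=> hg; have [u [-> hu]] := hg x; apply: chi_min. Qed.

Lemma good_step U0 F W : good U0 F -> good (U0 :|: W) (G F W).
Proof.
move=> hg x.
have [/andP[_ hFy] _] := nxtP F W x.
set y := nxt F W x in hFy *.
have [u [hu1 hu2]] := hg y.
have [v [hv1 hv2]] := hg x.
exists u; split; first by rewrite /G -/y hu1 setDDl.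
apply/subsetP => e he.
rewrite !inE.
case heU: (e \in U0); first by rewrite !orbT.
case heW: (e \in W); first by rewrite !orbT.
have h1 : e \in F y by rewrite hu1 inE heU he.
have := subsetP hFy e h1; rewrite inE heW orbF hv1 inE => /andP[_ h2].
by have := subsetP hv2 e h2; rewrite inE heU orbF => ->.
Qed.

Lemma good_init : good set0 S.
Proof. by move=> x; exists x; rewrite setD0 setU0. Qed.

Fixpoint rho (d : R) (j : nat) : R :=
  if j is j'.+1 then d + rho d j' - d * rho d j' else 0.

Lemma rho_bounds d j : 0 <= d -> d <= 1 -> 0 <= rho d j /\ rho d j <= 1 /\ rho d j <= j%:R * d.
Proof.
move=> d0 d1; elim: j => [|j [h0 [h1 h2]]] /=; first by rewrite mul0r lexx.
have e : d + rho d j - d * rho d j = d + rho d j * (1 - d) by ring.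
rewrite e; split; first by apply: addr_ge0 => //; apply: mulr_ge0; rewrite // subr_ge0.
split.
  have : rho d j * (1 - d) <= 1 - d by rewrite ler_piMl // subr_ge0.
  by move: (rho d j * (1 - d)) => p; rewrite lerBrDr addrC.
rewrite -addn1 natrD mulrDl mul1r addrC; apply: lerD => //.
by apply: le_trans h2; apply: ler_piMr => //; rewrite lerBlDr lerDl.
Qed.

Lemma mu0 U : mu 0 U = (U == set0)%:R.
Proof.
rewrite /mu; case: eqP => [->|hU].
  by rewrite big1 // => i _; rewrite inE subr0.
have [i hi] : exists i, i \in U by apply/set0Pn/eqP.
by rewrite (bigD1 i) //= hi mul0r.
Qed.

Definition gchi (V : {set 'I_n}) : R := \sum_x (#|chi S x V|)%:R.

Lemma chain d r : 0 < d -> d < 1 -> 16%:R <= d * r -> (0 < l)%nat ->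
  (forall T, (Nc S T)%:R * r ^+ #|T| <= l%:R) ->
  forall j U0 F, good U0 F ->
  \sum_U mu (rho d j) U * gchi (U0 :|: U) <= 3%:R^-1 ^+ j * \sum_x (#|F x|)%:R.
Proof.
move=> d0 d1 hdr hl hS; elim=> [|j IH] U0 F hg /=.
  rewrite (bigD1 set0) //= mu0 eqxx mul1r big1 ?addr0; last first.
    by move=> U /negbTE hU; rewrite mu0 hU mul0r.
  rewrite setU0 expr0 mul1r /gchi; apply: ler_sum => x _; rewrite ler_nat.
  exact: chi_le_good hg.
have hb := rho_bounds j (ltW d0) (ltW d1).
rewrite -(mu_union d (rho d j) (fun U => gchi (U0 :|: U))).
apply: (@le_trans _ _ (\sum_W mu d W * (3%:R^-1 ^+ j * \sum_x (#|G F W x|)%:R))).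
  apply: ler_sum => W _.
  rewrite (eq_bigr (fun U => mu d W * (mu (rho d j) U * gchi ((U0 :|: W) :|: U)))); last first.
    by move=> U _; rewrite setUA mulrA.
  rewrite -mulr_sumr; apply: ler_wpM2l; first by apply: mu_ge0; apply: ltW.
  exact: IH (good_step W hg).
have hsp : forall T, (Nc F T)%:R * r ^+ #|T| <= l%:R.
  move=> T; apply: le_trans (hS T); apply: ler_wpM2r.
    have r0 : 0 < r.
      have : 0 < d * r by apply: lt_le_trans hdr; rewrite ltr0n.
      by rewrite pmulr_rgt0.
    by apply: exprn_ge0; apply: ltW.
  rewrite ler_nat /Nc; apply: subset_leq_card; apply/subsetP => x; rewrite !inE => hT.
  exact: subset_trans hT (good_sub hg x).
have hr := round d0 d1 hdr hl hsp.
have e : \sum_W mu d W * (3%:R^-1 ^+ j * \sum_x (#|G F W x|)%:R) =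
    3%:R^-1 ^+ j * \sum_x \sum_W mu d W * (#|G F W x|)%:R.
  rewrite exchange_big mulr_sumr; apply: eq_bigr => W _.
  by rewrite mulr_sumr mulr_sumr mulr_sumr; apply: eq_bigr => x _; ring.
rewrite e exprS [3%:R^-1 * _]mulrC -mulrA; apply: ler_wpM2l => //.
by apply: exprn_ge0; rewrite invr_ge0 ler0n.
Qed.
End Chain.

Section Final.
Local Open Scope ring_scope.

Lemma avg_le_const n (g : {set 'I_n} -> R) c s : (s <= n)%nat -> (forall A, g A <= c) -> avg g s <= c.
Proof.
move=> hs hc; rewrite /avg ler_pdivrMr ?bin_gt0R //.
apply: le_trans (_ : \sum_(A : {set 'I_n} | #|A| == s) c <= _).
  exact: ler_sum.
rewrite sumr_const mulr_natr.
have -> : #|[pred A : {set 'I_n} | #|A| == s]| = 'C(n, s).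
  rewrite -[in RHS](card_ord n) -card_draws.
  by apply: eq_card => U; rewrite !inE.
by [].
Qed.

Lemma final_bound n l k (r : R) (S : 'I_l -> {set 'I_n}) m s :
  16%:R < r -> (0 < l)%nat -> (forall i, #|S i| = k) ->
  (forall T, (Nc S T)%:R * r ^+ #|T| <= l%:R) ->
  32%:R * m%:R * n%:R <= s%:R * r -> (s <= n)%nat ->
  avg (gchi S) s <= l%:R * k%:R * (2%:R / 3%:R) ^+ m.
Proof.
move=> hr hl hk hS hms hsn.
have r0 : 0 < r by apply: lt_trans hr; rewrite ltr0n.
have hg0 : forall A, 0 <= gchi S A by move=> A; apply: sumr_ge0.
have hgk : forall A, gchi S A <= l%:R * k%:R.
  move=> A; rewrite /gchi.
  apply: le_trans (_ : \sum_(x : 'I_l) k%:R <= _).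
    apply: ler_sum => x _; rewrite ler_nat -(hk x).
    have := @chi_min n l S x A x; rewrite /chi_adm subsetUl => /(_ isT) h.
    by apply: leq_trans h _; apply: subset_leq_card; exact: subsetDl.
  by rewrite sumr_const card_ord mulr_natl.
case: m hms => [|m] hms.
  by rewrite expr0 mulr1; apply: avg_le_const.
set d := 16%:R / r.
have d0 : 0 < d by rewrite divr_gt0 // ltr0n.
have d1 : d < 1 by rewrite ltr_pdivrMr // mul1r.
have hdr : 16%:R <= d * r by rewrite /d mulrAC -mulrA mulfV ?gt_eqF // mulr1.
have [rb0 [rb1 rb2]] := rho_bounds m.+1 (ltW d0) (ltW d1).
have hch := chain d0 d1 hdr hl hS m.+1 (good_init S).
rewrite [X in _ <= _ * X](eq_bigr (fun _ => k%:R)) in hch; last by move=> x _; rewrite hk.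
rewrite sumr_const card_ord in hch.
have hdecr : decr (gchi S).
  move=> A B hAB; apply: ler_sum => x _; rewrite ler_nat; exact: chi_mono.
have hbb := binom_bound rb0 rb1 hdecr hg0 hsn.
have hmk := markov_size n s rb0 rb1.
have hP : 2%:R^-1 <= \sum_(U : {set 'I_n} | (#|U| <= s)%nat) mu (rho d m.+1) U.
  apply: le_trans hmk.
  have hs1 : (0 : R) < s.+1%:R by rewrite ltr0n.
  have h1 : n%:R * rho d m.+1 <= n%:R * (m.+1%:R * d) by apply: ler_wpM2l.
  have h2 : n%:R * (m.+1%:R * d) = (16%:R * m.+1%:R * n%:R) / r.
    by rewrite /d; field; rewrite gt_eqF.
  have h3 : (16%:R * m.+1%:R * n%:R) / r <= s%:R / 2%:R.
    rewrite ler_pdivrMr //.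
    have e : s%:R / 2%:R * r = (s%:R * r) / 2%:R by ring.
    rewrite e ler_pdivlMr ?ltr0n //.
    by apply: le_trans hms; rewrite le_eqVlt; apply/orP; left; apply/eqP; ring.
  have h5 : n%:R * rho d m.+1 <= s%:R / 2%:R by rewrite (le_trans h1) // h2.
  have h6 : (s%:R / 2%:R : R) <= 2%:R^-1 * s.+1%:R.
    by rewrite mulrC ler_wpM2l ?invr_ge0 ?ler0n // ler_nat.
  have h4 : n%:R * rho d m.+1 / s.+1%:R <= 2%:R^-1.
    by rewrite ler_pdivrMr //; apply: le_trans h5 h6.
  move: h4; move: (n%:R * rho d m.+1 / s.+1%:R) => x hx.
  have e : (2%:R^-1 + 2%:R^-1 : R) = 1 by field.
  by rewrite lerBrDr; apply: le_trans (lerD (lexx _) hx) _; rewrite e.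
have hav0 : 0 <= avg (gchi S) s.
  by rewrite /avg; apply: divr_ge0 => //; apply: sumr_ge0.
have e0 : \sum_(U : {set 'I_n}) mu (rho d m.+1) U * gchi S (set0 :|: U) =
          \sum_(U : {set 'I_n}) mu (rho d m.+1) U * gchi S U.
  by apply: eq_bigr => U _; rewrite set0U.
rewrite e0 in hch.
have h1 : 2%:R^-1 * avg (gchi S) s <= 3%:R^-1 ^+ m.+1 * (k%:R *+ l).
  apply: le_trans hch; apply: le_trans hbb; exact: ler_wpM2r.
have h2 : avg (gchi S) s <= 2%:R * (3%:R^-1 ^+ m.+1 * (k%:R *+ l)).
  have e : avg (gchi S) s = 2%:R * (2%:R^-1 * avg (gchi S) s) by field.
  by rewrite e; apply: ler_wpM2l => //; rewrite ler0n.
apply: le_trans h2 _.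
have e : (2%:R / 3%:R : R) ^+ m.+1 = 2%:R ^+ m.+1 * 3%:R^-1 ^+ m.+1 by rewrite exprMn.
rewrite e -(mulr_natr (k%:R : R) l).
have h3 : (2%:R : R) <= 2%:R ^+ m.+1.
  by rewrite exprS -[X in X <= _]mulr1 ler_wpM2l ?ler0n // exprn_ege1 // ler1n.
have h4 : 0 <= (3%:R^-1 : R) ^+ m.+1 by apply: exprn_ge0; rewrite invr_ge0 ler0n.
have h5 : (0 : R) <= l%:R * k%:R by rewrite -natrM ler0n.
move: h3 h4 h5; move: (2%:R ^+ m.+1 : R) (3%:R^-1 ^+ m.+1 : R) => a b h3 h4 h5.
have -> : 2%:R * (b * (k%:R * l%:R)) = (l%:R * k%:R) * b * 2%:R by ring.
have -> : l%:R * k%:R * (a * b) = (l%:R * k%:R) * b * a by ring.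
by apply: ler_wpM2l => //; apply: mulr_ge0.
Qed.

Lemma expected_chi_avg n l (S : 'I_l -> {set 'I_n}) s :
  expected_chi S s = avg (gchi S) s / l%:R.
Proof.
rewrite /expected_chi /avg /gchi RdivE RmultE !INRE natr_sum.
rewrite (eq_bigr (fun x => \sum_(W : {set 'I_n} | #|W| == s) (#|chi S x W|)%:R)); last first.
  by move=> x _; rewrite natr_sum.
rewrite exchange_big /= invfM; ring.
Qed.

Lemma main_core n k (r : R) (l : nat) (S : 'I_l -> {set 'I_n}) (m s : nat) :
  Rlt (IZR 16) r -> Rle (pow r k) (INR l) -> (forall i, #|S i| = k) -> spread k r S ->
  Rle (Rdiv (Rmult (Rmult (IZR 32) (INR m)) (INR n)) r) (INR s) -> (s <= n)%nat ->
  Rle (expected_chi S s) (Rmult (INR k) (pow (Rdiv (IZR 2) (IZR 3)) m)).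
Proof.
move=> hr16 hrl hk hsp hms hsn.
have hr : 16%:R < r by move/RltP: hr16; rewrite IZRposE INRE.
have r0 : 0 < r by apply: lt_trans hr; rewrite ltr0n.
have hrk : r ^+ k <= l%:R by move/RleP: hrl; rewrite RpowE INRE.
have hl : (0 < l)%nat.
  have : (0 : R) < l%:R by apply: lt_le_trans hrk; apply: exprn_gt0.
  by rewrite ltr0n.
have hS : forall T, (Nc S T)%:R * r ^+ #|T| <= l%:R.
  move=> T; case: (boolP (T == set0)) => [/eqP ->|hT].
    by rewrite cards0 expr0 mulr1 ler_nat /Nc; apply: leq_trans (max_card _) _; rewrite card_ord.
  have h := hsp T hT; move/RleP: h; rewrite INRE => h.
  apply: le_trans hrk.
  have rn0 : r <> 0 by move: (lt0r_neq0 r0) => /eqP.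
  have e : powerRZ r (Z.of_nat k - Z.of_nat #|T|) * r ^+ #|T| = r ^+ k.
    rewrite -!RpowE !pow_powerRZ -RmultE -powerRZ_add //; congr powerRZ; lia.
  rewrite -e /Nc; apply: ler_wpM2r => //; apply: exprn_ge0; exact: ltW.
have hms' : 32%:R * m%:R * n%:R <= s%:R * r.
  move/RleP: hms; rewrite RdivE !RmultE !INRE IZRposE INRE /=.
  by rewrite ler_pdivrMr.
have hf := final_bound hr hl hk hS hms' hsn.
apply/RleP; rewrite expected_chi_avg RmultE RpowE RdivE !IZRposE !INRE /=.
rewrite ler_pdivrMr ?ltr0n //.
by apply: le_trans hf _; rewrite le_eqVlt; apply/orP; left; apply/eqP; ring.
Qed.
End Final.

From Stdlib Require Import Lra.
Bind Scope R_scope with R.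
Delimit Scope R_scope with R.

Theorem mainTheorem4 :
  exists beta kappa : R, (1 < beta)%R /\ (1 < kappa)%R /\
  forall (n k : nat) (gamma eps : R),
    (1 <= k)%nat ->
    (0 < gamma < 1/2)%R -> (0 < eps < 1/2)%R ->
    forall (r : R), r = (beta * (1 / gamma) * log2 (INR k / eps))%R ->
    forall (l : nat), (INR l - 1 < r ^ k <= INR l)%R ->
    forall (S : 'I_l -> {set 'I_n}),
      (forall i, #|S i| = k) ->
      spread k r S ->
      forall (m s : nat),
        (INR m <= r * gamma / kappa)%R ->
        (kappa * INR m * INR n / r <= INR s)%R ->
        (s <= n)%nat ->
        (expected_chi S s <= INR k * (2/3) ^ m)%R.
Proof.
exists 8%R, 32%R; split; [lra | split; [lra |]].
intros n k gamma eps hk hg he r hr l hl S hS hsp m s hm hs hsn.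
apply: (@main_core n k r l S m s) => //; last by case: hl.
have hk1 : (1 <= INR k)%R by change 1%R with (INR 1); apply: le_INR; apply/ssrnat.leP.
have hq : (2 < INR k / eps)%R.
  apply: (Rmult_lt_reg_r eps); first lra.
  rewrite /Rdiv Rmult_assoc Rinv_l; lra.
have hl2 : (0 < ln 2)%R by rewrite -ln_1; apply: ln_increasing; lra.
have hlog : (1 < log2 (INR k / eps))%R.
  rewrite /log2; apply: (Rmult_lt_reg_r (ln 2)) => //.
  rewrite /Rdiv Rmult_assoc Rinv_l; last lra.
  rewrite Rmult_1_r Rmult_1_l; apply: ln_increasing; lra.
have hg2 : (2 < 1 / gamma)%R.
  apply: (Rmult_lt_reg_r gamma); first lra.
  rewrite /Rdiv Rmult_assoc Rinv_l; lra.
rewrite hr; nra.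
Qed.
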